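(* Let $\alpha>0$ and consider the nonlinear program described in the context, and let $X$ be an open set containing $\mathcal{C}$ on which $\mathcal{G}_\alpha$ is well defined. Let $x\in X$ with $\Lambda_\alpha(x)\ne\emptyset$. Then for every $(u,v)\in\Lambda_\alpha(x)$, $\nabla f(x)^\top\mathcal{G}_\alpha(x)=-\|\mathcal{G}_\alpha(x)\|^2+\alpha u^\top g(x)+\alpha v^\top h(x)$. Moreover, if $x\in\mathcal{C}$ and MFCQ holds at $x$, then $\nabla f(x)^\top\mathcal{G}_\alpha(x)\le0$, with equality if and only if $x\in X_{KKT}$.
   Context: Let $f:\mathbb{R}^n\to\mathbb{R}$, $g:\mathbb{R}^n\to\mathbb{R}^m$, $h:\mathbb{R}^n\to\mathbb{R}^k$ be continuously differentiable; program: minimize $f(x)$ subject to $g(x)\le0$, $h(x)=0$; feasible set $\mathcal{C}$; $I_0(x)=\{i:g_i(x)=0\}$. MFCQ at $x$: $\{\nabla h_j(x)\}_{j=1}^k$ linearly independent and some $\xi$ has $\nabla h_j(x)^\top\xi=0$ for all $j$ and $\nabla g_i(x)^\top\xi<0$ for $i\in I_0(x)$. $X_{KKT}$ is the set of $x^*$ admitting $u^*\in\mathbb{R}^m,v^*\in\mathbb{R}^k$ with $\nabla f(x^* )+\frac{\partial g}{\partial x}(x^* )^\top u^*+\frac{\partial h}{\partial x}(x^* )^\top v^*=0$, $g(x^* )\le0$, $h(x^* )=0$, $u^*\ge0$, $(u^* )^\top g(x^* )=0$. With $G=\frac{\partial g}{\partial x}(x)$, $H=\frac{\partial h}{\partial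 x}(x)$: $\mathcal{G}_\alpha(x)$ is the unique minimizer over $\xi$ of $\frac12\|\xi+\nabla f(x)\|^2$ subject to $G\xi\le-\alpha g(x)$, $H\xi=-\alpha h(x)$; $\Lambda_\alpha(x)$ is the set of $(u,v)\in\mathbb{R}^m_{\ge0}\times\mathbb{R}^k$ for which some $\xi$ satisfies $\xi+\nabla f(x)+G^\top u+H^\top v=0$, $G\xi+\alpha g(x)\le0$, $H\xi+\alpha h(x)=0$, $u\ge0$, $u^\top(G\xi+\alpha g(x))=0$. The quantity $\nabla f(x)^\top\mathcal{G}_\alpha(x)$ is the (upper-right Dini) derivative of $f$ along the safe gradient flow $\dot x=\mathcal{G}_\alpha(x)$. *)

(* Defs.v *)
From HB Require Import structures.
From mathcomp Require Import all_boot all_order all_algebra.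
From mathcomp Require Import all_classical all_reals all_analysis.
Set Implicit Arguments. Unset Strict Implicit. Unset Printing Implicit Defensive.
Import Order.TTheory GRing.Theory Num.Theory.
Import numFieldNormedType.Exports.
Local Open Scope classical_set_scope.
Local Open Scope ring_scope.

Section Defs.
Variables (R : realType) (n m k : nat).
Notation V := 'rV[R]_n.

Definition dotv (u w : V) : R := \sum_(j < n) u 0 j * w 0 j.

Definition grad (f : V -> R) (x : V) : V := \row_(j < n) ('d f x (delta_mx 0 j : V)).

Definition C1 (f : V -> R) : Prop :=
  (forall x, differentiable f x) /\
  (forall j : 'I_n, continuous (fun x => 'd f x (delta_mx 0 j : V))).

Variables (f : V -> R) (g : 'I_m -> V -> R) (h : 'I_k -> V -> R).

Definition feasC (x : V) : Prop :=
  (forall i, g i x <= 0) /\ (forall j, h j x = 0).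

Definition MFCQ (x : V) : Prop :=
  (forall c : 'I_k -> R, \sum_(j < k) c j *: grad (h j) x = 0 -> forall j, c j = 0) /\
  (exists xi : V, (forall j, dotv (grad (h j) x) xi = 0) /\
                  (forall i, g i x = 0 -> dotv (grad (g i) x) xi < 0)).

Definition KKT (x : V) : Prop :=
  exists (u : 'I_m -> R) (v : 'I_k -> R),
    grad f x + \sum_(i < m) u i *: grad (g i) x + \sum_(j < k) v j *: grad (h j) x = 0 /\
    feasC x /\ (forall i, 0 <= u i) /\ \sum_(i < m) u i * g i x = 0.

Definition qp_feas (alpha : R) (x xi : V) : Prop :=
  (forall i, dotv (grad (g i) x) xi <= - alpha * g i x) /\
  (forall j, dotv (grad (h j) x) xi = - alpha * h j x).

Definition qp_obj (x xi : V) : R :=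
  2^-1 * dotv (xi + grad f x) (xi + grad f x).

(* xi is the (unique) minimizer of the QP, i.e. xi = G_alpha(x) *)
Definition is_Galpha (alpha : R) (x xi : V) : Prop :=
  qp_feas alpha x xi /\ forall z, qp_feas alpha x z -> qp_obj x xi <= qp_obj x z.

Definition Galpha_welldef (alpha : R) (x : V) : Prop :=
  exists! xi, is_Galpha alpha x xi.

Definition Lambda (alpha : R) (x : V) (u : 'I_m -> R) (v : 'I_k -> R) : Prop :=
  (forall i, 0 <= u i) /\
  exists xi : V,
    xi + grad f x + \sum_(i < m) u i *: grad (g i) x + \sum_(j < k) v j *: grad (h j) x = 0 /\
    qp_feas alpha x xi /\
    \sum_(i < m) u i * (dotv (grad (g i) x) xi + alpha * g i x) = 0.

End Defs.

(* Main.v *)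
Require Import Defs.
From HB Require Import structures.
From mathcomp Require Import all_boot all_order all_algebra.
From mathcomp Require Import all_classical all_reals all_analysis.
From mathcomp Require Import ring lra.
Import Order.TTheory GRing.Theory Num.Theory.
Import numFieldNormedType.Exports.
Local Open Scope classical_set_scope.
Local Open Scope ring_scope.

Section Helpers.
Variables (R : realType) (n : nat).
Notation V := 'rV[R]_n.

Lemma dotvC (u w : V) : dotv u w = dotv w u.
Proof. by rewrite /dotv; apply: eq_bigr => j _; rewrite mulrC. Qed.

Lemma dotvDl (u w z : V) : dotv (u + w) z = dotv u z + dotv w z.
Proof. by rewrite /dotv -big_split; apply: eq_bigr => j _; rewrite mxE mulrDl. Qed.

Lemma dotvNl (u z : V) : dotv (- u) z = - dotv u z.
Proof. by rewrite /dotv -sumrN; apply: eq_bigr => j _; rewrite mxE mulNr. Qed.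

Lemma dotvDr (u w z : V) : dotv z (u + w) = dotv z u + dotv z w.
Proof. by rewrite dotvC dotvDl !(dotvC z). Qed.

Lemma dotvNr (u z : V) : dotv z (- u) = - dotv z u.
Proof. by rewrite dotvC dotvNl dotvC. Qed.

Lemma dotv0r (z : V) : dotv z 0 = 0.
Proof. by rewrite /dotv big1 // => j _; rewrite mxE mulr0. Qed.

Lemma dotv_suml p (c : 'I_p -> R) (w : 'I_p -> V) (z : V) :
  dotv (\sum_(i < p) c i *: w i) z = \sum_(i < p) c i * dotv (w i) z.
Proof.
rewrite /dotv.
under eq_bigr => j _ do rewrite summxE mulr_suml.
rewrite exchange_big; apply: eq_bigr => i _.
by rewrite mulr_sumr; apply: eq_bigr => j _; rewrite !mxE mulrA.
Qed.

Lemma dotv_ge0 (u : V) : 0 <= dotv u u.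
Proof. by apply: sumr_ge0 => j _; rewrite -expr2 sqr_ge0. Qed.

Lemma dotv_eq0 (u : V) : dotv u u = 0 -> u = 0.
Proof.
move=> H; apply/rowP => j; rewrite mxE.
have H2 : u 0 j * u 0 j = 0.
  by apply: (psumr_eq0P _ H) => // i _; rewrite -expr2 sqr_ge0.
move: H2.
by move/eqP; rewrite mulf_eq0 orbb => /eqP.
Qed.

Lemma key m k (alpha : R) (a xi z : V) (G : 'I_m -> V) (H : 'I_k -> V)
  (u : 'I_m -> R) (v : 'I_k -> R) (gx : 'I_m -> R) (hx : 'I_k -> R) :
  xi + a + \sum_(i < m) u i *: G i + \sum_(j < k) v j *: H j = 0 ->
  (forall i, 0 <= u i) ->
  (forall i, dotv (G i) z <= - alpha * gx i) ->
  (forall j, dotv (H j) z = - alpha * hx j) ->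
  (forall j, dotv (H j) xi = - alpha * hx j) ->
  \sum_(i < m) u i * (dotv (G i) xi + alpha * gx i) = 0 ->
  dotv (z + a) (z + a) <= dotv (xi + a) (xi + a) -> z = xi.
Proof.
move=> Heq u0 Hgz Hhz Hhxi Hc Hle.
set SG := \sum_(i < m) u i *: G i in Heq; set SH := \sum_(j < k) v j *: H j in Heq.
set d := z - xi; set p := xi + a.
have ep : p = - (SG + SH).
  apply/eqP; rewrite -addr_eq0; apply/eqP; rewrite -Heq /p.
  by rewrite !addrA.
have ez : z + a = d + p by rewrite /d /p addrA subrK.
have hSH : dotv SH d = 0.
  rewrite dotv_suml big1 // => j _.
  by rewrite dotvC /d dotvDl dotvNl !(dotvC _ (H j)) Hhz Hhxi subrr mulr0.
have hSG : dotv SG d <= 0.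
  rewrite dotv_suml.
  have -> : \sum_(i < m) u i * dotv (G i) d =
     \sum_(i < m) u i * (dotv (G i) z + alpha * gx i)
     - \sum_(i < m) u i * (dotv (G i) xi + alpha * gx i).
    rewrite -sumrB; apply: eq_bigr => i _.
    rewrite dotvC /d dotvDl dotvNl !(dotvC _ (G i)).
    by rewrite -mulrBr; congr (_ * _); rewrite opprD addrACA subrr addr0.
  rewrite Hc subr0; apply: sumr_le0 => i _; apply: mulr_ge0_le0 => //.
  by move: (Hgz i); rewrite mulNr; lra.
have hpd : 0 <= dotv p d.
  by rewrite ep dotvNl dotvDl hSH addr0 oppr_ge0.
have expand : forall d' p' : V, dotv (d' + p') (d' + p') =
    dotv d' d' + 2 * dotv p' d' + dotv p' p'.
  by move=> d' p'; rewrite dotvDl !dotvDr (dotvC d' p'); ring.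
move: Hle; rewrite ez expand -/p => Hle.
have hdd : dotv d d = 0.
  by apply/eqP; rewrite eq_le dotv_ge0 andbT; lra.
by apply/eqP; rewrite -subr_eq0; apply/eqP; exact: dotv_eq0.
Qed.

End Helpers.
Arguments dotv_ge0 {R n}.
Arguments dotv_eq0 {R n u}.
Arguments dotv0r {R n}.

Theorem mainTheorem11 (R : realType) (n m k : nat)
  (f : 'rV[R]_n -> R) (g : 'I_m -> 'rV[R]_n -> R) (h : 'I_k -> 'rV[R]_n -> R)
  (alpha : R) (X : set 'rV[R]_n) :
  0 < alpha ->
  C1 f -> (forall i, C1 (g i)) -> (forall j, C1 (h j)) ->
  open X -> feasC g h `<=` X ->
  (forall y, X y -> Galpha_welldef f g h alpha y) ->
  forall x : 'rV[R]_n, X x ->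
  (exists u v, Lambda f g h alpha x u v) ->
  forall Gx : 'rV[R]_n, is_Galpha f g h alpha x Gx ->
  (forall (u : 'I_m -> R) (v : 'I_k -> R), Lambda f g h alpha x u v ->
     dotv (grad f x) Gx =
       - dotv Gx Gx + alpha * (\sum_(i < m) u i * g i x)
                    + alpha * (\sum_(j < k) v j * h j x)) /\
  (feasC g h x -> MFCQ g h x ->
     dotv (grad f x) Gx <= 0 /\
     (dotv (grad f x) Gx = 0 <-> KKT f g h x)).
Proof.
move=> alpha0 _ _ _ _ _ _ x _ [u1 [v1 HL1]] Gx [HGf Hmin].
have objle : forall xi, qp_feas g h alpha x xi ->
    dotv (Gx + grad f x) (Gx + grad f x) <= dotv (xi + grad f x) (xi + grad f x).
  move=> xi /Hmin; rewrite /qp_obj ler_pM2l //; by rewrite invr_gt0 ltr0n.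
have toxi : forall u v, Lambda f g h alpha x u v ->
   exists xi, Gx = xi /\
    xi + grad f x + \sum_(i < m) u i *: grad (g i) x + \sum_(j < k) v j *: grad (h j) x = 0 /\
    qp_feas g h alpha x xi /\
    \sum_(i < m) u i * (dotv (grad (g i) x) xi + alpha * g i x) = 0.
  move=> u v [u0 [xi [Heq [[Hg Hh] Hc]]]]; exists xi; split=> //.
  case: HGf => Hg' Hh'.
  apply: (@key R n m k alpha _ _ _ _ _ u v (fun i => g i x) (fun j => h j x) Heq u0 Hg' Hh' Hh Hc).
  by apply: objle.
have part1 : forall (u : 'I_m -> R) (v : 'I_k -> R), Lambda f g h alpha x u v ->
     dotv (grad f x) Gx =
       - dotv Gx Gx + alpha * (\sum_(i < m) u i * g i x)
                    + alpha * (\sum_(j < k) v j * h j x).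
  move=> u v HL; have [xi [-> [Heq [[Hg Hh] Hc]]]] := toxi u v HL.
  set SG := \sum_(i < m) u i *: grad (g i) x in Heq.
  set SH := \sum_(j < k) v j *: grad (h j) x in Heq.
  have ea : grad f x = - (xi + SG + SH).
    apply/eqP; rewrite -addr_eq0; apply/eqP; rewrite -Heq.
    by rewrite !addrA (addrC (grad f x) xi).
  have hG : dotv SG xi = - (alpha * \sum_(i < m) u i * g i x).
    rewrite dotv_suml.
    have : \sum_(i < m) u i * (dotv (grad (g i) x) xi + alpha * g i x) =
      \sum_(i < m) u i * dotv (grad (g i) x) xi + alpha * \sum_(i < m) u i * g i x.
      rewrite mulr_sumr -big_split; apply: eq_bigr => i _ /=.
      by rewrite mulrDr mulrCA.
    rewrite Hc; lra.
  have hH : dotv SH xi = - (alpha * \sum_(j < k) v j * h j x).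
    rewrite dotv_suml mulr_sumr -sumrN; apply: eq_bigr => j _.
    by rewrite Hh mulrCA mulNr.
  rewrite ea dotvNl !dotvDl hG hH; lra.
split=> // Hfeas _.
have Hf := Hfeas; case: Hf => Hgf Hhf.
have E := part1 u1 v1 HL1.
have Sh : \sum_(j < k) v1 j * h j x = 0 by rewrite big1 // => j _; rewrite Hhf mulr0.
have Sg : \sum_(i < m) u1 i * g i x <= 0.
  apply: sumr_le0 => i _; apply: mulr_ge0_le0 => //; by case: HL1.
have aSg : alpha * \sum_(i < m) u1 i * g i x <= 0 by apply: mulr_ge0_le0 => //; lra.
have D0 := dotv_ge0 Gx.
rewrite Sh mulr0 addr0 in E.
split; first by lra.
split.
- move=> E0.
  have DD : dotv Gx Gx = 0 by lra.
  have SS : \sum_(i < m) u1 i * g i x = 0.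
    have : alpha * \sum_(i < m) u1 i * g i x = 0 by lra.
    by move/eqP; rewrite mulf_eq0 gt_eqF //= => /eqP.
  have G0 := dotv_eq0 DD.
  have [xi [exi [Heq _]]] := toxi u1 v1 HL1.
  exists u1, v1; split; last first.
    by split=> //; split=> //; case: HL1.
  by move: Heq; rewrite -exi G0 add0r.
- move=> [u' [v' [Hk [_ [u'0 Hc']]]]].
  have G0 : Gx = 0.
    case: HGf => Hg' Hh'.
    apply: (@key R n m k alpha (grad f x) 0 _ _ _ u' v' (fun i => g i x) (fun j => h j x) _ u'0 Hg' Hh').
    + by rewrite add0r.
    + by move=> j; rewrite dotv0r Hhf mulr0.
    + rewrite (eq_bigr (fun i => alpha * (u' i * g i x))).
        by rewrite -mulr_sumr Hc' mulr0.
      by move=> i _; rewrite dotv0r add0r mulrCA.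
    + apply: objle; split.
      * move=> i; rewrite dotv0r mulNr oppr_ge0; apply: mulr_ge0_le0 => //.
        exact: ltW.
      * by move=> j; rewrite dotv0r Hhf mulr0.
  by rewrite G0 dotv0r.
Qed.
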